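(* Let datasets be finite multisets $D=\{(x_i,y_i)\}_{i=1}^n$ of records with $x_i,y_i\in[0,1]$. Define $g(D)=(S_{xy}(D),\,S_{(1-x)y}(D),\,S_{1-y}(D))\in\mathbb{R}^3$, where $S_{xy}(D)=\sum_{i=1}^n x_iy_i$, $S_{(1-x)y}(D)=\sum_{i=1}^n (1-x_i)y_i$ and $S_{1-y}(D)=\sum_{i=1}^n (1-y_i)$. Then the global $\ell_1$-sensitivity of $g$ under the add/remove neighboring relation equals $1$, i.e. $\Delta_1(g):=\sup_{D\sim D'}\|g(D)-g(D')\|_1=1$.
   Context: Two datasets $D$ and $D'$ are neighboring, written $D\sim D'$, if one is obtained from the other by adding or removing a single record $(x^*,y^* )\in[0,1]^2$ (add/remove or unbounded model). $\|\cdot\|_1$ is the $\ell_1$-norm on $\mathbb{R}^3$. *)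

(* Defs.v *)
From Stdlib Require Import Reals Lra List Permutation.
Open Scope R_scope.

Definition record := (R * R)%type.
Definition in01 (r : R) : Prop := 0 <= r <= 1.
Definition valid_record (p : record) : Prop := in01 (fst p) /\ in01 (snd p).
(* A dataset: a finite multiset of records in [0,1]^2, represented as a list. *)
Definition dataset := list record.
Definition valid_dataset (D : dataset) : Prop := Forall valid_record D.

Definition S_xy (D : dataset) : R := fold_right (fun p acc => fst p * snd p + acc) 0 D.
Definition S_1mx_y (D : dataset) : R := fold_right (fun p acc => (1 - fst p) * snd p + acc) 0 D.
Definition S_1my (D : dataset) : R := fold_right (fun p acc => (1 - snd p) + acc) 0 D.

Definition g (D : dataset) : R * R * R := (S_xy D, S_1mx_y D, S_1my D).

Definition l1_dist (u v : R * R * R) : R :=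
  Rabs (fst (fst u) - fst (fst v)) + Rabs (snd (fst u) - snd (fst v)) + Rabs (snd u - snd v).

Definition neighbors (D D' : dataset) : Prop :=
  exists r : record, valid_record r /\
    (Permutation D' (r :: D) \/ Permutation D (r :: D')).

Definition sensitivity_values (f : dataset -> R * R * R) (v : R) : Prop :=
  exists D D', valid_dataset D /\ valid_dataset D' /\ neighbors D D' /\
    v = l1_dist (f D) (f D').

(* Main.v *)
Require Import Defs.
From Stdlib Require Import Reals Lra List Permutation.
Open Scope R_scope.

Lemma perm_S (h : record -> R) (l l' : dataset) : Permutation l l' ->
  fold_right (fun p acc => h p + acc) 0 l = fold_right (fun p acc => h p + acc) 0 l'.
Proof.
  induction 1; simpl; try lra.
Qed.

Lemma absA c a : 0 <= c -> Rabs (a - (c + a)) = c.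
Proof. intros; replace (a - (c+a)) with (-c) by ring; rewrite Rabs_Ropp, Rabs_right; lra. Qed.
Lemma absB c a : 0 <= c -> Rabs (c + a - a) = c.
Proof. intros; replace (c+a-a) with c by ring; rewrite Rabs_right; lra. Qed.

Lemma val_one D D' : neighbors D D' -> l1_dist (g D) (g D') = 1.
Proof.
  intros [[x y] [[[Hx1 Hx2] [Hy1 Hy2]] [HP|HP]]]; simpl in *;
  unfold l1_dist, g, S_xy, S_1mx_y, S_1my; simpl;
  rewrite !(perm_S _ _ _ HP); simpl;
  rewrite ?(absA (x*y)), ?(absA ((1-x)*y)), ?(absA (1-y)),
    ?(absB (x*y)), ?(absB ((1-x)*y)), ?(absB (1-y)) by nra; lra.
Qed.

Theorem mainTheorem2 : is_lub (sensitivity_values g) 1.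
Proof.
  split.
  - intros v [D [D' [_ [_ [HN ->]]]]]. rewrite (val_one _ _ HN). lra.
  - intros b Hb. apply Hb. exists nil, ((0,0)::nil).
    split; [constructor|]. split.
    + constructor; [|constructor]. unfold valid_record, in01; simpl; lra.
    + split.
      * exists (0,0). split; [unfold valid_record, in01; simpl; lra|]. left. apply Permutation_refl.
      * symmetry. apply val_one. exists (0,0). split; [unfold valid_record, in01; simpl; lra|]. left. apply Permutation_refl.
Qed.
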